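(* Let $f,g\colon[a,b]\to\mathbb{R}$ be integrable, with $a<b$. If either ($g$ is non-decreasing and $f\in M^+$) or ($g$ is non-increasing and $f\in M^-$), then $$\frac{1}{b-a}\int_a^b f(x)g(x)\,dx\geq \frac{1}{b-a}\int_a^b f(x)\,dx\cdot\frac{1}{b-a}\int_a^b g(x)\,dx.$$ If instead either ($g$ is non-decreasing and $f\in M^-$) or ($g$ is non-increasing and $f\in M^+$), then the reverse inequality $\le$ holds.
   Context: An integrable function $f\colon[a,b]\to\mathbb{R}$ belongs to the class $M^+$ if there is a $c\in[a,b]$ such that: (1) if $f(x)<\frac{1}{b-a}\int_a^b f(t)\,dt$ then $x<c$, and (2) if $f(x)>\frac{1}{b-a}\int_a^b f(t)\,dt$ then $x>c$. It belongs to the class $M^-$ if there is a $c\in[a,b]$ such that: (1) if $f(x)<\frac{1}{b-a}\int_a^b f(t)\,dt$ then $x>c$, and (2) if $f(x)>\frac{1}{b-a}\int_a^b f(t)\,dt$ then $x<c$. *)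

(* Defs.v *)
From Stdlib Require Import Reals.
From Coquelicot Require Import Coquelicot.
Open Scope R_scope.

Definition mean (f : R -> R) (a b : R) : R := RInt f a b / (b - a).

Definition M_plus (f : R -> R) (a b : R) : Prop :=
  exists c, a <= c <= b /\
    forall x, a <= x <= b ->
      (f x < mean f a b -> x < c) /\ (f x > mean f a b -> x > c).

Definition M_minus (f : R -> R) (a b : R) : Prop :=
  exists c, a <= c <= b /\
    forall x, a <= x <= b ->
      (f x < mean f a b -> x > c) /\ (f x > mean f a b -> x < c).

Definition nondecr_on (g : R -> R) (a b : R) : Prop :=
  forall x y, a <= x -> x <= y -> y <= b -> g x <= g y.

Definition nonincr_on (g : R -> R) (a b : R) : Prop :=
  forall x y, a <= x -> x <= y -> y <= b -> g y <= g x.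

(* Main.v *)
Require Import Defs.
From Stdlib Require Import Reals Lra Psatz.
From Coquelicot Require Import Coquelicot.
Open Scope R_scope.
Lemma pos_Rl_map (F : R -> R) (l : list R) (i : nat) :
  (i < length l)%nat -> RList.pos_Rl (List.map F l) i = F (RList.pos_Rl l i).
Proof.
  revert i; induction l as [|x l IH]; intros i Hi; simpl in *; [lia|].
  destruct i; [reflexivity|]. apply IH; lia.
Qed.

Lemma SF_comp (F : R -> R) a b (phi : StepFun a b) :
  IsStepFun (fun x => F (phi x)) a b.
Proof.
  destruct phi as [fe [l [lf H]]]; simpl.
  exists l, (List.map F lf).
  destruct H as (H1 & H2 & H3 & H4 & H5).
  repeat split; auto.
  - rewrite List.length_map; auto.
  - intros i Hi x Hx. rewrite (H5 i Hi x Hx). rewrite pos_Rl_map; auto.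
    rewrite H4 in Hi; simpl in Hi; lia.
Qed.

Lemma RI_sq h a b M : Riemann_integrable h a b ->
  (forall t, Rmin a b <= t <= Rmax a b -> Rabs (h t) <= M) ->
  Riemann_integrable (fun x => h x * h x) a b.
Proof.
  intros Hh HM eps.
  set (M' := Rabs M).
  assert (HM' : 0 <= M') by apply Rabs_pos.
  assert (He : 0 < eps / (1 + 2 * M')).
  { apply Rdiv_lt_0_compat; [apply cond_pos | lra]. }
  destruct (Hh (mkposreal _ He)) as [phi [psi [H1 H2]]].
  set (c := fun x => Rmax (- M') (Rmin M' x)).
  exists (mkStepFun (SF_comp (fun x => c x * c x) a b phi)).
  exists (mkStepFun (StepFun_P28 (2 * M') psi psi)).
  split.
  - intros t Ht; cbn [fe].
    specialize (H1 t Ht). specialize (HM t Ht).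
    assert (HM2 : Rabs (h t) <= M') by (unfold M'; eapply Rle_trans; [exact HM| apply RRle_abs]).
    set (u := h t) in *. set (v := phi t) in *. set (p := psi t) in *.
    assert (Hu : - M' <= u <= M') by (apply Rabs_le_between; auto).
    assert (Hw : - M' <= c v <= M' /\ Rabs (u - c v) <= Rabs (u - v)).
    { unfold c.
      destruct (Rle_dec v (-M')) as [Hv|Hv].
      - rewrite Rmin_right by lra. rewrite Rmax_left by lra.
        split; [lra|]. rewrite !Rabs_right by lra. lra.
      - destruct (Rle_dec v M') as [Hv'|Hv'].
        + rewrite Rmin_right by lra. rewrite Rmax_right by lra. split; lra.
        + rewrite Rmin_left by lra. rewrite Rmax_right by lra.
          split; [lra|]. rewrite !Rabs_left1 by lra. lra. }
    destruct Hw as [Hw1 Hw2].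
    replace (u * u - c v * c v) with ((u - c v) * (u + c v)) by ring.
    rewrite Rabs_mult.
    assert (Habs : Rabs (u + c v) <= 2 * M') by (apply Rabs_le; lra).
    assert (0 <= Rabs (u - c v)) by apply Rabs_pos.
    assert (Rabs (u - c v) <= p) by lra.
    apply Rle_trans with (p * (2 * M')).
    + apply Rmult_le_compat; auto; apply Rabs_pos.
    + assert (0 <= p) by lra. assert (0 <= p * M') by (apply Rmult_le_pos; lra). lra.
  - rewrite StepFun_P30. simpl in H2.
    replace (RiemannInt_SF psi + 2 * M' * RiemannInt_SF psi)
      with ((1 + 2 * M') * RiemannInt_SF psi) by ring.
    rewrite Rabs_mult, (Rabs_right (1 + 2*M')) by lra.
    apply Rmult_lt_compat_l with (r := 1 + 2 * M') in H2; [|lra].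
    replace ((1 + 2 * M') * (eps / (1 + 2 * M'))) with (pos eps) in H2 by (field; lra).
    exact H2.
Qed.

Lemma ex_RInt_sq h a b : ex_RInt h a b -> ex_RInt (fun x => h x * h x) a b.
Proof.
  intros H. destruct (ex_RInt_ub h a b H) as [M HM].
  apply ex_RInt_Reals_1. apply RI_sq with M.
  - apply ex_RInt_Reals_0; auto.
  - exact HM.
Qed.

Lemma ex_RInt_plusR (f g : R -> R) a b : ex_RInt f a b -> ex_RInt g a b ->
  ex_RInt (fun x => f x + g x) a b.
Proof. intros; apply (ex_RInt_plus f g); auto. Qed.

Lemma ex_RInt_scalR (f : R -> R) a b k : ex_RInt f a b -> ex_RInt (fun x => k * f x) a b.
Proof. intros; apply (ex_RInt_scal f a b k); auto. Qed.

Lemma ex_RInt_mul (f g : R -> R) a b : ex_RInt f a b -> ex_RInt g a b ->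
  ex_RInt (fun x => f x * g x) a b.
Proof.
  intros Hf Hg.
  assert (Hp : ex_RInt (fun x => f x + g x) a b) by (apply ex_RInt_plusR; auto).
  assert (Hm : ex_RInt (fun x => f x + (-1) * g x) a b)
    by (apply ex_RInt_plusR; auto; apply ex_RInt_scalR; auto).
  apply ex_RInt_sq in Hp. apply ex_RInt_sq in Hm.
  assert (H : ex_RInt (fun x => (/4) * ((f x + g x) * (f x + g x) + (-1) * ((f x + (-1) * g x) * (f x + (-1) * g x)))) a b).
  { apply ex_RInt_scalR, ex_RInt_plusR; auto. apply ex_RInt_scalR; auto. }
  assert (Heq : forall x, / 4 * ((f x + g x) * (f x + g x) + -1 * ((f x + -1 * g x) * (f x + -1 * g x))) = f x * g x)
    by (intros; field).
  eapply ex_RInt_ext; [|exact H]. intros x _. apply Heq.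
Qed.
Lemma is_RInt_plusR (f g : R -> R) a b If Ig : is_RInt f a b If -> is_RInt g a b Ig ->
  is_RInt (fun x => f x + g x) a b (If + Ig).
Proof. intros; apply (is_RInt_plus f g); auto. Qed.

Lemma is_RInt_scalR (f : R -> R) a b k If : is_RInt f a b If -> is_RInt (fun x => k * f x) a b (k * If).
Proof. intros; apply (is_RInt_scal f a b k); auto. Qed.

Lemma is_RInt_constR a b (v : R) : is_RInt (fun _ => v) a b ((b - a) * v).
Proof. apply (is_RInt_const a b v). Qed.

Lemma key (f g : R -> R) a b k : a < b -> ex_RInt f a b -> ex_RInt g a b ->
  RInt (fun x => (f x - mean f a b) * (g x - k)) a b
  = RInt (fun x => f x * g x) a b - mean f a b * RInt g a b.
Proof.
  intros Hab Hf Hg.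
  set (m := mean f a b).
  assert (Hfg := ex_RInt_mul f g a b Hf Hg).
  apply (RInt_correct (V := R_CompleteNormedModule)) in Hf, Hg, Hfg.
  assert (H := is_RInt_plusR _ _ _ _ _ _
     (is_RInt_plusR _ _ _ _ _ _ Hfg (is_RInt_scalR _ _ _ (-k) _ Hf))
     (is_RInt_plusR _ _ _ _ _ _ (is_RInt_scalR _ _ _ (-m) _ Hg) (is_RInt_constR a b (m * k)))).
  assert (Heq : forall x, f x * g x + - k * f x + (- m * g x + m * k) = (f x - m) * (g x - k))
    by (intros; ring).
  apply (is_RInt_ext _ (fun x => (f x - m) * (g x - k))) in H; [|intros x _; apply Heq].
  rewrite (is_RInt_unique _ _ _ _ H).
  unfold m, mean. 
  assert (E : forall r1 r2 r3 : R, r3 + -k*r1 + (-(r1/(b-a))*r2 + (b-a)*(r1/(b-a)*k)) = r3 - r1/(b-a)*r2)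
    by (intros; field; lra).
  apply E.
Qed.

Lemma ex_H (f g : R -> R) a b m k : ex_RInt f a b -> ex_RInt g a b ->
  ex_RInt (fun x => (f x - m) * (g x - k)) a b.
Proof.
  intros Hf Hg. assert (E: forall u v:R, u + -1*v = u - v) by (intros; ring).
  apply ex_RInt_mul.
  - apply (ex_RInt_ext (fun x => f x + (-1) * m)); [intros; apply E|].
    apply ex_RInt_plusR; auto. apply (ex_RInt_const (V:=R_NormedModule)).
  - apply (ex_RInt_ext (fun x => g x + (-1) * k)); [intros; apply E|].
    apply ex_RInt_plusR; auto. apply (ex_RInt_const (V:=R_NormedModule)).
Qed.

Lemma ge_case (f g : R -> R) a b k : a < b -> ex_RInt f a b -> ex_RInt g a b ->
  (forall x, a <= x <= b -> 0 <= (f x - mean f a b) * (g x - k)) ->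
  mean (fun x => f x * g x) a b >= mean f a b * mean g a b.
Proof.
  intros Hab Hf Hg Hp.
  assert (H0 : 0 <= RInt (fun x => (f x - mean f a b) * (g x - k)) a b).
  { apply RInt_ge_0; [lra| apply ex_H; auto |]. intros x Hx; apply Hp; lra. }
  rewrite key in H0 by auto.
  unfold mean at 1 3.
  assert (E : forall r1 r2 m : R, 0 <= r1 - m * r2 -> r1 / (b - a) >= m * (r2 / (b - a))).
  { intros r1 r2 m H. apply Rle_ge. apply Rmult_le_reg_r with (b - a); [lra|].
    replace (r1 / (b - a) * (b - a)) with r1 by (field; lra).
    replace (m * (r2 / (b - a)) * (b - a)) with (m * r2) by (field; lra). lra. }
  apply E; exact H0.
Qed.

Lemma le_case (f g : R -> R) a b k : a < b -> ex_RInt f a b -> ex_RInt g a b ->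
  (forall x, a <= x <= b -> (f x - mean f a b) * (g x - k) <= 0) ->
  mean (fun x => f x * g x) a b <= mean f a b * mean g a b.
Proof.
  intros Hab Hf Hg Hp.
  assert (H0 : RInt (fun x => (f x - mean f a b) * (g x - k)) a b <= RInt (fun _ => 0) a b).
  { apply RInt_le; [lra| apply ex_H; auto | apply (ex_RInt_const (V:=R_NormedModule)) |].
    intros x Hx; apply Hp; lra. }
  rewrite (is_RInt_unique _ _ _ _ (is_RInt_constR a b 0)) in H0.
  rewrite key in H0 by auto.
  unfold mean at 1 3.
  assert (E : forall r1 r2 m : R, r1 - m * r2 <= (b - a) * 0 -> r1 / (b - a) <= m * (r2 / (b - a))).
  { intros r1 r2 m H. apply Rmult_le_reg_r with (b - a); [lra|].
    replace (r1 / (b - a) * (b - a)) with r1 by (field; lra).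
    replace (m * (r2 / (b - a)) * (b - a)) with (m * r2) by (field; lra). lra. }
  apply E; exact H0.
Qed.

Theorem theorem4 (f g : R -> R) (a b : R) :
  a < b -> ex_RInt f a b -> ex_RInt g a b ->
  ((nondecr_on g a b /\ M_plus f a b) \/ (nonincr_on g a b /\ M_minus f a b) ->
     mean (fun x => f x * g x) a b >= mean f a b * mean g a b) /\
  ((nondecr_on g a b /\ M_minus f a b) \/ (nonincr_on g a b /\ M_plus f a b) ->
     mean (fun x => f x * g x) a b <= mean f a b * mean g a b).
Proof.
  intros Hab Hf Hg. split.
  - intros [[Hg' [c [Hc Hm]]] | [Hg' [c [Hc Hm]]]];
      apply (ge_case f g a b (g c)); auto; intros x Hx;
      destruct (Hm x Hx) as [H1 H2];
      destruct (Rtotal_order (f x) (mean f a b)) as [Hl|[He|Hr]].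
    + specialize (H1 Hl). first [assert (g x <= g c) by (apply Hg'; lra) | assert (g c <= g x) by (apply Hg'; lra)]; nra.
    + rewrite He. nra.
    + specialize (H2 Hr). first [assert (g x <= g c) by (apply Hg'; lra) | assert (g c <= g x) by (apply Hg'; lra)]; nra.
    + specialize (H1 Hl). first [assert (g x <= g c) by (apply Hg'; lra) | assert (g c <= g x) by (apply Hg'; lra)]; nra.
    + rewrite He. nra.
    + specialize (H2 Hr). first [assert (g x <= g c) by (apply Hg'; lra) | assert (g c <= g x) by (apply Hg'; lra)]; nra.
  - intros [[Hg' [c [Hc Hm]]] | [Hg' [c [Hc Hm]]]];
      apply (le_case f g a b (g c)); auto; intros x Hx;
      destruct (Hm x Hx) as [H1 H2];
      destruct (Rtotal_order (f x) (mean f a b)) as [Hl|[He|Hr]].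
    + specialize (H1 Hl). first [assert (g x <= g c) by (apply Hg'; lra) | assert (g c <= g x) by (apply Hg'; lra)]; nra.
    + rewrite He. nra.
    + specialize (H2 Hr). first [assert (g x <= g c) by (apply Hg'; lra) | assert (g c <= g x) by (apply Hg'; lra)]; nra.
    + specialize (H1 Hl). first [assert (g x <= g c) by (apply Hg'; lra) | assert (g c <= g x) by (apply Hg'; lra)]; nra.
    + rewrite He. nra.
    + specialize (H2 Hr). first [assert (g x <= g c) by (apply Hg'; lra) | assert (g c <= g x) by (apply Hg'; lra)]; nra.
Qed.
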